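(* Let $a,b,d\in\mathbb C$ with $a\notin\mathbb Z$ and $d\notin\{0,-1,-2,\dots\}$. Then, as an identity of formal power series in $x,y$, $$\mathrm H_4(a,b;d;x,y)={}_1F_1(a;d;x)\,{}_1F_1(b;1-a;-y)+\sum_{k=1}^\infty\sum_{l=1}^k\frac{(-1)^{k+l}(k-1)!}{(l-1)!\,l!\,(k-l)!}\,\frac{(b)_l}{(1-a)_l(d)_k}\,x^ky^l\,{}_1F_1(a+k;d+k;x)\,{}_1F_1(b+l;1-a+l;-y).$$
   Context: Pochhammer symbol: $(\lambda)_k=\Gamma(\lambda+k)/\Gamma(\lambda)$ for every integer $k$ (possibly negative) whenever defined; $(\lambda)_0=1$. ${}_1F_1(a;c;x)=\sum_{k\ge0}\frac{(a)_k}{(c)_k k!}x^k$. Confluent Horn function $\mathrm H_4(a,b;d;x,y)=\sum_{p,q\ge0}\frac{(a)_{p-q}(b)_q}{(d)_p\,p!\,q!}x^py^q$. All functions are regarded as formal power series in $x,y$; the infinite double sum converges in the formal (degree) topology. *)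

(* Defs.v *)
(* Formal power series in two variables x, y over a field R
   are represented by their coefficient functions nat -> nat -> R,
   f p q = coefficient of x^p y^q. *)
From HB Require Import structures.
From mathcomp Require Import all_boot all_order all_algebra all_field.
Set Implicit Arguments. Unset Strict Implicit. Unset Printing Implicit Defensive.
Import Order.TTheory GRing.Theory Num.Theory.
Local Open Scope ring_scope.

Section Defs.
Variable R : fieldType.

(* Pochhammer symbol for an integer index k:
   k >= 0 : (l)_k = l (l+1) ... (l+k-1);
   k = -m < 0 : (l)_{-m} = Gamma(l-m)/Gamma(l) = 1/((l-1)(l-2)...(l-m)). *)
Definition poch (l : R) (k : int) : R :=
  match k with
  | Posz n => \prod_(i < n) (l + i%:R)
  | Negz m => (\prod_(i < m.+1) (l - (i.+1)%:R))^-1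
  end.

Definition fps2 := nat -> nat -> R.

Definition F11 (a c : R) (k : nat) : R := poch a k%:Z / (poch c k%:Z * (k`!)%:R).

Definition fps_x (f : nat -> R) : fps2 := fun p q => if q == 0%N then f p else 0.
Definition fps_y (f : nat -> R) : fps2 := fun p q => if p == 0%N then f q else 0.
Definition fps_neg (f : nat -> R) : nat -> R := fun k => (-1) ^+ k * f k.

Definition fps2_mul (f g : fps2) : fps2 := fun p q =>
  \sum_(i < p.+1) \sum_(j < q.+1) f i j * g (p - i)%N (q - j)%N.
Definition fps2_add (f g : fps2) : fps2 := fun p q => f p q + g p q.
Definition fps2_scale (c : R) (f : fps2) : fps2 := fun p q => c * f p q.
Definition fps2_mono (k l : nat) : fps2 := fun p q => if (p == k) && (q == l) then 1 else 0.

Definition H4 (a b d : R) : fps2 := fun p q =>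
  poch a (p%:Z - q%:Z) * poch b q%:Z / (poch d p%:Z * (p`!)%:R * (q`!)%:R).

Definition rhs_term (a b d : R) (k l : nat) : fps2 :=
  fps2_scale
    ((-1) ^+ (k + l) * ((k.-1)`!)%:R / (((l.-1)`!)%:R * (l`!)%:R * ((k - l)`!)%:R)
      * (poch b l%:Z / (poch (1 - a) l%:Z * poch d k%:Z)))
    (fps2_mul (fps2_mono k l)
       (fps2_mul (fps_x (F11 (a + k%:R) (d + k%:R)))
                 (fps_y (fps_neg (F11 (b + l%:R) (1 - a + l%:R)))))).

Definition rhs_partial (a b d : R) (M : nat) : fps2 :=
  fps2_add (fps2_mul (fps_x (F11 a d)) (fps_y (fps_neg (F11 b (1 - a)))))
    (fun p q => \sum_(1 <= k < M.+1) \sum_(1 <= l < k.+1) rhs_term a b d k l p q).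

End Defs.

(* Main.v *)
Require Import Defs.
From HB Require Import structures.
From mathcomp Require Import all_boot all_order all_algebra all_field.
From mathcomp Require Import ring lra.
Import Order.TTheory GRing.Theory Num.Theory.
Local Open Scope ring_scope.

Arguments poch : simpl never.

Section L.
Variable R : numFieldType.
Implicit Types x y : R.

Lemma pochS x n : poch x n.+1%:Z = poch x n%:Z * (x + n%:R).
Proof. by rewrite /poch big_ord_recr. Qed.

Lemma poch0 x : poch x 0%:Z = 1.
Proof. by rewrite /poch big_ord0. Qed.

Lemma poch_add x m n : poch x (m + n)%N%:Z = poch x m%:Z * poch (x + m%:R) n%:Z.
Proof.
elim: n => [|n IH]; first by rewrite addn0 poch0 mulr1.
by rewrite addnS !pochS IH natrD addrA mulrA.
Qed.

Lemma poch1 x n : poch x n.+1%:Z = x * poch (x + 1) n%:Z.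
Proof. by rewrite -add1n poch_add /poch big_ord1 addr0. Qed.

Lemma poch_rev x n : poch (x - n%:R) n%:Z = \prod_(i < n) (x - (i.+1)%:R).
Proof.
elim: n x => [|n IH] x; first by rewrite poch0 big_ord0.
rewrite poch1 big_ord_recr mulrC -IH; congr (poch _ _ * _).
by rewrite -addn1 natrD opprD addrA subrK.
Qed.


Lemma poch_refl x q : (-1) ^+ q * poch (1 - x) q%:Z = poch (x - q%:R) q%:Z.
Proof.
rewrite poch_rev; elim: q => [|q IH]; first by rewrite expr0 mul1r poch0 big_ord0.
rewrite exprS pochS big_ord_recr -IH /= -addn1 natrD; ring.
Qed.

Lemma poch_diff x p q : (forall k : int, poch x k != 0) ->
  poch x (p%:Z - q%:Z) * poch (x - q%:R) q%:Z = poch (x - q%:R) p%:Z.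
Proof.
move=> hx; case: (leqP q p) => hqp.
  by rewrite subzn // mulrC -[in RHS](subnKC hqp) poch_add subrK.
have [m ->] : exists m, q = (p + m.+1)%N.
  by exists (q - p).-1; rewrite prednK ?subn_gt0 // subnKC // ltnW.
have hN : p%:Z - (p + m.+1)%N%:Z = Negz m.
  by rewrite NegzE PoszD opprD addrA subrr add0r.
rewrite hN poch_add.
have -> : x - (p + m.+1)%:R + p%:R = x - m.+1%:R.
  by rewrite natrD; ring.
rewrite poch_rev mulrCA.
have := hx (Negz m); rewrite /poch => h.
by rewrite mulVf ?mulr1 // -invr_eq0.
Qed.

Lemma CV p : forall a x : R, (forall n : nat, poch a n%:Z != 0) ->
  \sum_(k < p.+1) (-1) ^+ k * 'C(p, k)%:R * poch x k%:Z / poch a k%:Z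
  = poch (a - x) p%:Z / poch a p%:Z.
Proof.
elim: p => [|p IH] a x ha.
  by rewrite big_ord1 !poch0 bin0 expr0 !mul1r invr1.
have ha1 : forall n : nat, poch (a + 1) n%:Z != 0.
  move=> n; have := ha n.+1; rewrite poch1; apply: contra => /eqP ->.
  by rewrite mulr0.
have a0 : a != 0 by have := ha 1%N; rewrite poch1 poch0 mulr1.
rewrite big_ord_recl /= bin0 expr0 !mul1r !poch0 invr1 ?mulr1.
under eq_bigr => i _ do rewrite /bump /= add1n binS natrD mulrDr mulrDl mulrDl.
rewrite big_split /= addrA.
have -> : 1 + \sum_(i < p.+1) (-1) ^+ i.+1 * 'C(p, i.+1)%:R * poch x i.+1%:Z / poch a i.+1%:Z
   = \sum_(k < p.+1) (-1) ^+ k * 'C(p, k)%:R * poch x k%:Z / poch a k%:Z.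
  rewrite [RHS]big_ord_recl /= bin0 expr0 !mul1r !poch0 invr1 ?mulr1; congr (_ + _).
  rewrite big_ord_recr /= bin_small // mulr0 !mul0r addr0.
  by apply: eq_bigr => i _; rewrite /bump add1n.
rewrite IH //.
have -> : \sum_(i < p.+1) (-1) ^+ i.+1 * 'C(p, i)%:R * poch x i.+1%:Z / poch a i.+1%:Z
  = - (x / a) * \sum_(i < p.+1) (-1) ^+ i * 'C(p, i)%:R * poch (x + 1) i%:Z / poch (a + 1) i%:Z.
  rewrite big_distrr; apply: eq_bigr => i _ /=.
  rewrite !poch1 exprS invfM; field.
  by rewrite a0 ha1.
rewrite IH //.
have e : a + 1 - (x + 1) = a - x by ring.
rewrite e pochS poch1.
have hp : poch (a + 1) p%:Z != 0 := ha1 p.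
have hp2 : poch a p.+1%:Z != 0 := ha p.+1.
move: hp2; rewrite poch1 => hp2.
have hp3 : poch a p%:Z != 0 := ha p.
have := ha p.+1; rewrite pochS => hp4.
have hap : a + p%:R != 0 by move: hp4; rewrite mulf_eq0 negb_or => /andP[].
have key : poch a p%:Z * (a + p%:R) = a * poch (a + 1) p%:Z by rewrite -pochS poch1.
have key2 : poch (a + 1) p%:Z = poch a p%:Z * (a + p%:R) / a.
  by rewrite key mulrAC divff // mul1r.
rewrite key2; field.
by rewrite hp3 hap a0.
Qed.

End L.

Section F.
Variable R : fieldType.

Lemma sum_if_eq n k (F : nat -> R) :
  \sum_(i < n) (if (i : nat) == k then F i else 0) = if (k < n)%N then F k else 0.
Proof.
elim: n => [|n IH]; first by rewrite big_ord0.
rewrite big_ord_recr /= IH ltnS.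
case: (ltngtP k n) => h.
- by rewrite addr0.
- by rewrite addr0.
- by rewrite add0r h.
Qed.

Lemma mul_xy (f g : nat -> R) p q :
  fps2_mul (fps_x f) (fps_y g) p q = f p * g q.
Proof.
rewrite /fps2_mul.
transitivity (\sum_(i < p.+1) (if (i : nat) == p then f p * g q else 0)).
  apply: eq_bigr => i _.
  rewrite big_ord_recl /= /fps_x /fps_y /= subn0 big1 ?addr0; last first.
    by move=> j _; rewrite mul0r.
  have hi := ltn_ord i; rewrite subn_eq0.
  case: (ltngtP i p) => h.
  - by rewrite mulr0.
  - by move: hi; rewrite ltnS leqNgt h.
  - by rewrite h.
by rewrite (sum_if_eq _ _ (fun _ => f p * g q)) ltnSn.
Qed.

Lemma mul_mono k l (g : fps2 R) p q :
  fps2_mul (fps2_mono R k l) g p q =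
  if (k <= p)%N && (l <= q)%N then g (p - k)%N (q - l)%N else 0.
Proof.
rewrite /fps2_mul /fps2_mono.
transitivity (\sum_(i < p.+1) (if (i : nat) == k then
   (if (l <= q)%N then g (p - k)%N (q - l)%N else 0) else 0)).
  apply: eq_bigr => i _.
  case: eqP => [->|hne]; last by rewrite big1 // => j _; rewrite mul0r.
  rewrite /= -(sum_if_eq (q.+1) l (fun j => g (p - k)%N (q - j)%N)).
  by apply: eq_bigr => j _; case: eqP => _; rewrite ?mul1r ?mul0r.
by rewrite (sum_if_eq _ _ (fun _ => if (l <= q)%N then g (p - k)%N (q - l)%N else 0)) ltnS; case: (k <= p)%N.
Qed.

End F.

Lemma vand k q : (0 < k)%N ->
  (\sum_(1 <= l < k.+1) 'C(k.-1, l.-1) * 'C(q, l) = 'C((q + k).-1, k))%N.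
Proof.
case: k => // k _.
rewrite big_add1 /= addnS /= -(binomial.Vandermonde q k k.+1) big_ord_recl.
rewrite bin0 subn0 (bin_small (ltnSn k)) muln0 add0n big_mkord.
apply: eq_bigr => i _; rewrite mulnC; congr (_ * _).
have hi : (i <= k)%N by rewrite -ltnS.
by rewrite /= /bump /= add1n subSS bin_sub.
Qed.

Lemma poch_nat (R : numFieldType) q k :
  (((q + k).-1 ^_ k)%N%:R : R) = poch (q%:R : R) k%:Z.
Proof.
elim: k => [|k IH]; first by rewrite ffactn0 poch0.
rewrite addnS /= ffactnS natrM pochS -IH mulrC -natrD.
case: k IH => [|k] IH; first by rewrite addn0.
by rewrite addnS.
Qed.

Section Main.
Variable C : numClosedFieldType.
Variables a b d : C.
Hypothesis hAZ : forall n : int, poch a n != 0.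
Let hA (n : nat) : poch a n%:Z != 0 := hAZ n.
Hypothesis hD : forall n : nat, poch d n%:Z != 0.
Hypothesis hE : forall n : nat, poch (1 - a) n%:Z != 0.

Definition Kc p q : C := poch b q%:Z * poch a p%:Z * (-1) ^+ q /
  (poch d p%:Z * poch (1 - a) q%:Z * (p`!)%:R * (q`!)%:R).

Lemma split_nz (x : C) m n : poch x (m + n)%N%:Z != 0 ->
  poch x m%:Z != 0 /\ poch (x + m%:R) n%:Z != 0.
Proof. by rewrite poch_add mulf_eq0 negb_or => /andP[]. Qed.

Lemma nat_nz n : (n%:R : C) != 0 <-> (0 < n)%N.
Proof. by rewrite pnatr_eq0 lt0n. Qed.

Lemma term_eq k l p q : (l <= k)%N -> (k < p)%N ->
  rhs_term a b d k.+1 l.+1 p q = Kc p q *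
   ((-1) ^+ k.+1 * ('C(p, k.+1) * (k.+1)`! * ('C(k, l) * 'C(q, l.+1)))%:R / poch a k.+1%:Z).
Proof.
move=> hlk hkp.
rewrite /rhs_term /fps2_scale mul_mono hkp /=.
case: (leqP l.+1 q) => hlq; last first.
  by rewrite (bin_small hlq) !muln0 !mulr0 ?mul0r ?mulr0.
rewrite mul_xy /F11 /fps_neg /Kc.
have hK : (k.+1 <= p)%N := hkp.
have hL : (l.+1 <= q)%N := hlq.
have [nA1 nA2] : poch a k.+1%:Z != 0 /\ poch (a + k.+1%:R) (p - k.+1)%N%:Z != 0.
  by apply: split_nz; rewrite subnKC.
have [nD1 nD2] : poch d k.+1%:Z != 0 /\ poch (d + k.+1%:R) (p - k.+1)%N%:Z != 0.
  by apply: split_nz; rewrite subnKC.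
have [nE1 nE2] : poch (1 - a) l.+1%:Z != 0 /\ poch (1 - a + l.+1%:R) (q - l.+1)%N%:Z != 0.
  by apply: split_nz; rewrite subnKC.
have e1 : poch a p%:Z = poch a k.+1%:Z * poch (a + k.+1%:R) (p - k.+1)%N%:Z.
  by rewrite -poch_add subnKC.
have e2 : poch d p%:Z = poch d k.+1%:Z * poch (d + k.+1%:R) (p - k.+1)%N%:Z.
  by rewrite -poch_add subnKC.
have e3 : poch b q%:Z = poch b l.+1%:Z * poch (b + l.+1%:R) (q - l.+1)%N%:Z.
  by rewrite -poch_add subnKC.
have e4 : poch (1 - a) q%:Z = poch (1 - a) l.+1%:Z * poch (1 - a + l.+1%:R) (q - l.+1)%N%:Z.
  by rewrite -poch_add subnKC.
have s1 : (-1) ^+ (q - l.+1) = (-1) ^+ q / (-1) ^+ l.+1 :> C.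
  by rewrite -[in RHS](subnKC hL) exprD mulrAC divff ?mul1r // signr_eq0.
have f1 := bin_fact hK.
have f2 := bin_fact hL.
have f3 := bin_fact hlk.
rewrite e1 e2 e3 e4 s1 -f1 -f2 -f3 subSS exprD !natrM.
have sL : (-1) ^+ l.+1 != 0 :> C by rewrite signr_eq0.
have fnz : forall n, (n`!%:R : C) != 0 by move=> n; rewrite pnatr_eq0 -lt0n fact_gt0.
have b1 : ('C(p, k.+1)%:R : C) != 0 by rewrite pnatr_eq0 -lt0n bin_gt0.
have b2 : ('C(q, l.+1)%:R : C) != 0 by rewrite pnatr_eq0 -lt0n bin_gt0.
have b3 : ('C(k, l)%:R : C) != 0 by rewrite pnatr_eq0 -lt0n bin_gt0.
have hl1 : (1 + l%:R : C) != 0 by rewrite addrC natr1 pnatr_eq0.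
have hk1 : (1 + k%:R : C) != 0 by rewrite addrC natr1 pnatr_eq0.
have fk := fnz k.
field.
by rewrite nA1 nE1 nE2 nD1 nD2 sL b1 b2 hl1 hk1 !fnz.
Qed.


Lemma vand' k q :
  (\sum_(0 <= l < k.+1) 'C(k, l) * 'C(q, l.+1) = 'C(q + k, k.+1))%N.
Proof.
have := @vand k.+1 q (ltn0Sn k); rewrite big_add1 /= addnS /= => <-.
by apply: eq_big_nat.
Qed.

Lemma inner k p q : (k < p)%N ->
  \sum_(1 <= l < k.+2) rhs_term a b d k.+1 l p q =
  Kc p q * ((-1) ^+ k.+1 * 'C(p, k.+1)%:R * poch (q%:R) k.+1%:Z / poch a k.+1%:Z).
Proof.
move=> hkp; rewrite big_add1 /=.
rewrite (eq_big_nat _ _ (F2 := fun l => Kc p q *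
   ((-1) ^+ k.+1 * ('C(p, k.+1) * (k.+1)`! * ('C(k, l) * 'C(q, l.+1)))%:R /
    poch a k.+1%:Z))); last first.
  by move=> l /andP[_ hl]; apply: term_eq.
rewrite -big_distrr /=; congr (_ * _).
under eq_big_nat => l _ do rewrite natrM mulrA mulrAC.
rewrite -big_distrr /= -natr_sum vand' -poch_nat addnS /= -bin_ffact !natrM.
field.
exact: hA.
Qed.

Lemma coef_eq p q M : (p <= M)%N -> rhs_partial a b d M p q = H4 a b d p q.
Proof.
move=> hM.
rewrite /rhs_partial /fps2_add mul_xy.
rewrite (big_cat_nat (n := p.+1)) //=.
have -> : \sum_(p.+1 <= k < M.+1) \sum_(1 <= l < k.+1) rhs_term a b d k l p q = 0.
  rewrite big_nat_cond big1 // => k /andP[/andP[hk _] _].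
  rewrite big1 // => l _.
  by rewrite /rhs_term /fps2_scale mul_mono leqNgt hk /= mulr0.
rewrite addr0 big_add1 /=.
rewrite (eq_big_nat _ _ (F2 := fun k => Kc p q * ((-1) ^+ k.+1 * 'C(p, k.+1)%:R
   * poch (q%:R) k.+1%:Z / poch a k.+1%:Z))); last first.
  by move=> k /andP[_ hk]; apply: inner.
rewrite -big_distrr /=.
have fnz : forall n, (n`!%:R : C) != 0 by move=> n; rewrite pnatr_eq0 -lt0n fact_gt0.
have h0 : F11 a d p * fps_neg (F11 b (1 - a)) q = Kc p q.
  rewrite /F11 /fps_neg /Kc; field.
  by rewrite hD hE !fnz.
rewrite h0 -[X in X + _]mulr1 -mulrDr.
have := @CV C p a q%:R hA; rewrite big_ord_recl /= bin0 expr0 !mul1r !poch0 invr1 mulr1.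
rewrite big_mkord.
have -> : \sum_(i < p) (-1) ^+ i.+1 * 'C(p, i.+1)%:R * poch (q%:R : C) i.+1%:Z / poch a i.+1%:Z
  = \sum_(i < p) (-1) ^+ bump 0 i * 'C(p, bump 0 i)%:R * poch (q%:R : C) (bump 0 i)%:Z
       / poch a (bump 0 i)%:Z.
  by apply: eq_bigr => i _; rewrite /bump add1n.
move=> ->.
have r := @poch_refl C a q.
have e : poch (1 - a) q%:Z = (-1) ^+ q * poch (a - q%:R) q%:Z by rewrite -r signrMK.
have nq : poch (a - q%:R) q%:Z != 0.
  by have := hE q; rewrite e mulf_eq0 negb_or => /andP[].
have sq : (-1) ^+ q != 0 :> C by rewrite signr_eq0.
rewrite /Kc /H4 -(@poch_diff C a p q hAZ) e.
field.
by rewrite hA hD nq sq !fnz.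
Qed.

Lemma coef_eq' p q : exists N : nat, forall M : nat, (N <= M)%N ->
    rhs_partial a b d M p q = H4 a b d p q.
Proof. by exists p => M hM; apply: coef_eq. Qed.

End Main.

Theorem mainTheorem8 (C : numClosedFieldType) (a b d : C)
  (ha : forall n : int, a != n%:~R)
  (hd : forall n : nat, d != - n%:R) :
  forall p q : nat, exists N : nat, forall M : nat, (N <= M)%N ->
    rhs_partial a b d M p q = H4 a b d p q.
Proof.
have hAZ : forall n : int, poch a n != 0.
  case=> m; rewrite /poch.
    apply/prodf_neq0 => i _; rewrite addr_eq0.
    by have := ha (- (i : nat)%:Z); rewrite mulrNz pmulrn.
  rewrite invr_eq0; apply/prodf_neq0 => i _; rewrite subr_eq0.
  by have := ha (i.+1)%:Z; rewrite pmulrn.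
have hD : forall n : nat, poch d n%:Z != 0.
  move=> n; rewrite /poch; apply/prodf_neq0 => i _; rewrite addr_eq0.
  exact: hd.
have hE : forall n : nat, poch (1 - a) n%:Z != 0.
  move=> n; rewrite /poch; apply/prodf_neq0 => i _.
  rewrite addrAC subr_eq0 eq_sym.
  by have := ha (i.+1)%:Z; rewrite intS intrD.
exact: coef_eq' hAZ hD hE.
Qed.
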